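(* Let $G$ be a $d$-regular bicirculant nut graph of order $n$. Then (i) $n$ and $d$ are both even, and at least one of them is divisible by $4$; and (ii) $d \ge 4$ and $n \ge d+4$.
   Context: A bicirculant graph is a graph that has an automorphism whose cycle decomposition on the vertex set consists of exactly two orbits of equal size. A nut graph is a graph with at least two vertices whose adjacency matrix has eigenvalue $0$ with multiplicity exactly one, such that the corresponding eigenvector has no zero entries. *)

(* Defs.v *)
From HB Require Import structures.
From mathcomp Require Import all_boot all_order all_algebra all_fingroup all_field.
Set Implicit Arguments. Unset Strict Implicit. Unset Printing Implicit Defensive.
Import Order.TTheory GRing.Theory Num.Theory.
Local Open Scope ring_scope.

Definition simple_graph (T : finType) (e : rel T) : Prop :=
  symmetric e /\ irreflexive e.

Definition regular (T : finType) (e : rel T) (d : nat) : Prop :=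
  forall x : T, #|[set y | e x y]| = d.

Definition is_automorphism (T : finType) (e : rel T) (s : {perm T}) : Prop :=
  forall x y : T, e (s x) (s y) = e x y.

Definition bicirculant (T : finType) (e : rel T) : Prop :=
  exists s : {perm T}, is_automorphism e s /\
    #|porbits s| = 2%N /\
    (forall A B, A \in porbits s -> B \in porbits s -> #|A| = #|B|).

Definition adj_mx (T : finType) (e : rel T) : 'M[algC]_#|T| :=
  \matrix_(i, j) (e (enum_val i) (enum_val j))%:R.

Definition nut_graph (T : finType) (e : rel T) : Prop :=
  (2 <= #|T|)%N /\
  mup 0 (char_poly (adj_mx e)) = 1%N /\
  (forall v : 'cV[algC]_#|T|, adj_mx e *m v = 0 -> v != 0 ->
     forall i, v i 0 != 0).

(* Main.v *)
From HB Require Import structures.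
From mathcomp Require Import all_boot all_order all_algebra all_fingroup all_field.
From mathcomp Require Import zify ring.
Require Import Defs.
Set Implicit Arguments. Unset Strict Implicit. Unset Printing Implicit Defensive.
Import Order.TTheory GRing.Theory Num.Theory.

Open Scope ring_scope.

Definition kerf (T : finType) (e : rel T) (f : T -> algC) :=
  forall z, \sum_t (e z t)%:R * f t = 0.

Lemma sum_enum_val (T : finType) (F : T -> algC) :
  \sum_(i < #|T|) F (enum_val i) = \sum_t F t.
Proof. by rewrite -big_enum_val. Qed.

Lemma nut_ker (T : finType) (e : rel T) (f : T -> algC) t0 t :
  nut_graph e -> kerf e f -> f t0 != 0 -> f t != 0.
Proof.
move=> [_ [_ Hn]] Hf Ht0.
pose v : 'cV[algC]_#|T| := \col_i f (enum_val i).
have Hv : adj_mx e *m v = 0.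
  apply/matrixP => i j; rewrite !mxE (ord1 j).
  rewrite -[RHS](Hf (enum_val i)) -[in RHS]sum_enum_val.
  by apply: eq_bigr => k _; rewrite !mxE.
have Hv0 : v != 0.
  apply/eqP => /matrixP /(_ (enum_rank t0) 0); rewrite !mxE enum_rankK.
  by move/eqP; rewrite (negbTE Ht0).
by have := Hn v Hv Hv0 (enum_rank t); rewrite mxE enum_rankK.
Qed.

Lemma nut_exists (T : finType) (e : rel T) :
  symmetric e -> nut_graph e -> exists f, kerf e f /\ exists t, f t != 0.
Proof.
move=> Hsym [_ [Hmup _]].
have Hr : root (char_poly (adj_mx e)) 0.
  rewrite -dvdp_XsubCl XsubC_dvd ?Hmup //.
  by apply: monic_neq0; apply: char_poly_monic.
rewrite -eigenvalue_root_char in Hr.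
case/eigenvalueP: Hr => v Hv Hv0.
exists (fun t => v 0 (enum_rank t)); split.
  move=> z.
  move/matrixP: Hv => /(_ 0 (enum_rank z)).
  rewrite scale0r !mxE => H; apply: eq_trans _ H.
  rewrite -[in LHS]sum_enum_val; apply: eq_bigr => i _.
  by rewrite !mxE enum_rankK enum_valK Hsym mulrC.
case: (pickP (fun i => v 0 i != 0)) => [i Hi|H].
  by exists (enum_val i); rewrite enum_valK.
case/eqP: Hv0; apply/matrixP => a b; rewrite (ord1 a) mxE.
by apply/eqP; move: (H b) => /= /negbFE.
Qed.

Close Scope ring_scope.
Open Scope ring_scope.

Lemma kerf_lin (T : finType) (e : rel T) f g a b :
  kerf e f -> kerf e g -> kerf e (fun t => a * f t + b * g t).
Proof.
move=> Hf Hg z.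
under eq_bigr => t _ do rewrite mulrDr mulrCA [_ * (b * _)]mulrCA.
by rewrite big_split /= -!mulr_sumr Hf Hg !mulr0 addr0.
Qed.

Lemma one_dim (T : finType) (e : rel T) f g t0 :
  nut_graph e -> kerf e f -> kerf e g -> f t0 != 0 ->
  forall t, g t * f t0 = g t0 * f t.
Proof.
move=> Hn Hf Hg Hft0 t.
have Hh := kerf_lin (f t0) (- g t0) Hg Hf.
apply/eqP; rewrite -subr_eq0; apply/eqP.
have : (fun t => f t0 * g t + - g t0 * f t) t0 = 0.
  by rewrite /= mulrC mulNr subrr.
case: (eqVneq ((fun t => f t0 * g t + - g t0 * f t) t) 0) => [|Hne H0].
  by rewrite /= mulNr mulrC.
by have := @nut_ker _ _ _ t t0 Hn Hh Hne; rewrite H0 eqxx.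
Qed.

Lemma kerf_conj (T : finType) (e : rel T) f :
  kerf e f -> kerf e (fun t => (f t)^*).
Proof.
move=> Hf z; have := congr1 (fun x : algC => x^*) (Hf z).
rewrite /= rmorph_sum rmorph0 => H; apply: eq_trans H; apply: eq_bigr => t _.
by rewrite rmorphM /= conjC_nat.
Qed.

Lemma kerf_perm (T : finType) (e : rel T) (s : {perm T}) f :
  is_automorphism e s -> kerf e f -> kerf e (fun t => f (s t)).
Proof.
move=> Ha Hf z; apply: eq_trans (Hf (s z)).
rewrite [RHS](reindex_inj (@perm_inj _ s)) /=.
by apply: eq_bigr => t _; rewrite Ha.
Qed.


Close Scope ring_scope.

Lemma orbit_setup (T : finType) (s : {perm T}) (u0 : T) :
  #|porbits s| = 2 ->
  (forall A B, A \in porbits s -> B \in porbits s -> #|A| = #|B|) ->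
  exists w0, [/\ forall t, (t \notin porbit s u0) = (t \in porbit s w0),
     forall t, #|porbit s t| = #|porbit s u0| &
     #|T| = (#|porbit s u0| * 2)%N ].
Proof.
move=> H2 Heq.
set U := porbit s u0.
have inP t : porbit s t \in porbits s by apply: imset_f.
case: (pickP (fun t => t \notin U)) => [w0 Hw0|Hall]; last first.
  have : porbits s \subset [set U].
    apply/subsetP => X /imsetP [t _ ->]; rewrite inE.
    by rewrite eq_porbit_mem; move: (Hall t) => /= /negbFE.
  by move/subset_leq_card; rewrite cards1 H2.
set W := porbit s w0.
have HUW : U != W by rewrite eq_sym eq_porbit_mem.
have cover t : (porbit s t == U) || (porbit s t == W).
  case: (eqVneq (porbit s t) U) => //= HU.
  apply/negPn/negP => HW.
  have : [set porbit s t; U; W] \subset porbits s.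
    by apply/subsetP => X; rewrite !inE => /orP [/orP [] | ] /eqP ->; apply: inP.
  move/subset_leq_card; rewrite H2 setUC !cardsU1 cards1 !inE.
  by rewrite (eq_sym W) (negbTE HW) (eq_sym W) (negbTE HUW) HU.
exists w0; split.
- move=> t; rewrite -!eq_porbit_mem.
  by case: (eqVneq (porbit s t) U) (cover t) => [->|] /=; rewrite ?(negbTE HUW).
- by move=> t; apply: Heq; apply: inP.
- rewrite -(cardC U) muln2 -addnn; congr (_ + _)%N.
  have -> : #|[predC U]| = #|W|.
    apply: eq_card => t; rewrite !inE.
    rewrite -!eq_porbit_mem.
    case: (eqVneq (porbit s t) U) (cover t) => [E|NE] /=.
      by rewrite E (negbTE HUW).
    by move=> ->.
  by apply: Heq; apply: inP.
Qed.

Lemma iter_mul_porbit (T : finType) (s : {perm T}) k y :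
  iter (k * #|porbit s y|) s y = y.
Proof.
elim: k => [//|k IH]; rewrite mulSn iterD IH.
exact: iter_porbit.
Qed.

Lemma period (T : finType) (s : {perm T}) v i :
  (((s ^+ i)%g) v == v) = (#|porbit s v| %| i).
Proof.
set m := #|porbit s v|.
have m0 : 0 < m by rewrite lt0n card_porbit_neq0.
rewrite permX {1}(divn_eq i m) addnC iterD iter_mul_porbit.
have Hr : i %% m < m by rewrite ltn_mod.
have Hu := uniq_traject_porbit s v.
have := @nth_uniq _ v _ (i %% m) 0 _ _ Hu.
rewrite size_traject => /(_ Hr m0).
rewrite !nth_traject // /= => ->.

Qed.

Open Scope ring_scope.

Lemma kerf_ext (T : finType) (e : rel T) f g :
  (forall t, f t = g t) -> kerf e f -> kerf e g.
Proof. by move=> H Hf z; apply: eq_trans (Hf z); apply: eq_bigr => t _; rewrite H. Qed.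

Lemma mode (T : finType) (s : {perm T}) (lam : algC) (phi x : T -> algC) v0 t :
  (forall t, phi (s t) = lam * phi t) -> (forall t, x (s t) = lam * x t) ->
  t \in porbit s v0 -> phi t * x v0 = phi v0 * x t.
Proof.
move=> Hp Hx /porbitP [i ->].
have G (f : T -> algC) : (forall t, f (s t) = lam * f t) ->
    f ((s ^+ i)%g v0) = lam ^+ i * f v0.
  move=> Hf; elim: i => [|i IH].
    by rewrite expg0 perm1 expr0 mul1r.
  by rewrite expgSr permM Hf IH exprS mulrA.
rewrite (G _ Hp) (G _ Hx); ring.
Qed.

Lemma signed (T : finType) (S : {set T}) (g : T -> algC) :
  (forall t, t \in S -> g t ^+ 2 = 1) ->
  \sum_(t in S) g t = #|S|%:R - 2 * #|[set t in S | g t == -1]|%:R.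
Proof.
move=> H.
have N1 : (1 : algC) != -1.
  rewrite -addr_eq0. have -> : (1 + 1 : algC) = 2%:R by []. by rewrite pnatr_eq0.
have -> : \sum_(t in S) g t = \sum_(t in S) (1 - 2 * (g t == -1)%:R).
  apply: eq_bigr => t /H /eqP; rewrite sqrf_eq1 => /orP [] /eqP ->.
    by rewrite (negbTE N1) mulr0 subr0.
  rewrite eqxx mulr1. have -> : (2 : algC) = 1 + 1 by []. by rewrite opprD addrA subrr sub0r.
rewrite sumrB sumr_const -mulr_sumr; congr (_ - 2 * _).
rewrite -natr_sum; congr (_%:R).
rewrite -sum1_card big_mkcond /= [RHS]big_mkcond /=.
by apply: eq_bigr => t _; rewrite inE; case: (t \in S); case: (g t == -1).
Qed.

Lemma twin (T : finType) (e : rel T) v v' t1 :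
  symmetric e -> nut_graph e -> v != v' -> (forall t, e v t = e v' t) ->
  t1 != v -> t1 != v' -> False.
Proof.
move=> Hsym Hn Hvv' Htw H1 H2.
pose y := fun t : T => (t == v)%:R - (t == v')%:R : algC.
have Hy : kerf e y.
  move=> z; rewrite /y.
  have S1 w : \sum_i (e z i)%:R * (i == w)%:R = (e z w)%:R :> algC.
    by rewrite (bigD1 w) //= eqxx mulr1 big1 ?addr0 // => i /negbTE ->; rewrite mulr0.
  under eq_bigr => t _ do rewrite mulrBr.
  by rewrite sumrB !S1 Hsym Htw Hsym subrr.
have := @nut_ker _ _ y v t1 Hn Hy.
rewrite /y eqxx eq_sym (negbTE Hvv') (negbTE H1) (negbTE H2) subr0 subrr.
move=> H; suff : (0 : algC) != 0 by rewrite eqxx.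
by apply: H; rewrite eq_sym oner_eq0.
Qed.

Close Scope ring_scope.

Lemma aut_pow (T : finType) (e : rel T) (s : {perm T}) i :
  is_automorphism e s -> is_automorphism e (s ^+ i)%g.
Proof.
move=> Ha; elim: i => [|i IH] x y; first by rewrite expg0 !perm1.
by rewrite expgSr !permM Ha IH.
Qed.

Lemma nbr_card (T : finType) (e : rel T) (g : {perm T}) (U : {set T}) v :
  is_automorphism e g -> (forall t, (g t \in U) = (t \in U)) ->
  #|[set t | e (g v) t] :&: U| = #|[set t | e v t] :&: U| /\
  #|[set t | e (g v) t] :\: U| = #|[set t | e v t] :\: U|.
Proof.
move=> Ha HU; split.
  rewrite -(card_preimset _ (@perm_inj _ g)).
  by apply: eq_card => t; rewrite !inE Ha HU.
rewrite -(card_preimset _ (@perm_inj _ g)).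
by apply: eq_card => t; rewrite !inE Ha HU.
Qed.

Lemma even_invol (X : finType) (f : X -> X) (A : {set X}) :
  (forall x, x \in A -> f x \in A) -> (forall x, x \in A -> f (f x) = x) ->
  (forall x, x \in A -> f x != x) -> ~~ odd #|A|.
Proof.
move: {2}#|A| (leqnn #|A|) => k; elim: k A => [|k IH] A.
  by rewrite leqn0 => /eqP ->.
move=> Hk Hin Hff Hne.
case: (set_0Vmem A) => [->|[x Hx]]; first by rewrite cards0.
set A' := A :\ x :\ f x.
have HfxA' : f x \in A :\ x by rewrite !inE Hne ?Hin.
have Hc : #|A| = (#|A'|.+2)%N.
  by rewrite (cardsD1 x A) Hx (cardsD1 (f x) (A :\ x)) HfxA'.
have Hy y : y \in A' -> [/\ y \in A, y != x & y != f x].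
  by rewrite !inE => /and3P [].
have HA' : ~~ odd #|A'|.
  apply: IH.
  - by move: Hk; rewrite Hc ltnS => /ltnW.
  - move=> y /Hy [Hy1 Hy2 Hy3]; rewrite !inE Hin // andbT.
    apply/andP; split.
      by apply: contra Hy2 => /eqP E; rewrite -(Hff y Hy1) E Hff.
    by apply: contra Hy3 => /eqP <-; rewrite Hff.
  - by move=> y /Hy [Hy1 _ _]; apply: Hff.
  - by move=> y /Hy [Hy1 _ _]; apply: Hne.
by rewrite Hc /=; rewrite negbK.
Qed.

Lemma arith (kU kW kU' kW' r1 r2 r3 r4 d : nat) :
  (kU + kW = d)%N -> (kU' + kW' = d)%N ->
  (r1 <= kU)%N -> (r2 <= kW')%N -> (r3 <= kW)%N -> (r4 <= kU')%N ->
  (kU * kW' + 4 * r1 * r2 + 4 * kW * r3 =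
     kW * kW + 4 * r3 * r3 + 2 * kU * r2 + 2 * kW' * r1)%N ->
  (kW + 2 * r4 = kU' + 2 * r3)%N -> kW <> (2 * r3)%N ->
  [/\ ~~ odd d, (1 <= kU)%N, (1 <= kW)%N,
      (d = 2 -> [/\ kU = 1, kW = 1, kU' = 1 & kW' = 1])%N &
      (r1 = 0 -> r2 = 0 -> r3 = 0 -> r4 = 0 -> kU = kW)%N].
Proof.
move=> E1 E2 B1 B2 B3 B4 E3 E4 E5.
have HkU : (1 <= kU)%N.
  case: kU E1 E3 B1 => [|kU] // E1 E3 B1.
  have r10 : r1 = 0%N by lia.
  subst r1. exfalso; apply: E5. nia.
have HkW : (1 <= kW)%N.
  case: kW E1 E3 B3 E5 E4 => [|kW] // E1 E3 B3 E5 E4.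
  have r30 : r3 = 0%N by lia.
  by subst r3.
split => //.
- apply/negP => Hd.
  have := congr1 odd E3; rewrite !oddD ?oddM /=.
  have := congr1 odd E4; rewrite !oddD ?oddM /=.
  have := congr1 odd E1; have := congr1 odd E2.
  rewrite !oddD Hd.
  by case: (odd kU); case: (odd kW); case: (odd kU'); case: (odd kW');
     case: (odd r1); case: (odd r2); case: (odd r3); case: (odd r4).
- move=> Hd; subst d.
  have h1 : kU = 1%N by lia.
  have h2 : kW = 1%N by lia.
  subst kU kW.
  clear E3; split => //; lia.
- move=> h1 h2 h3 h4; subst r1 r2 r3 r4.
  nia.
Qed.

Lemma handshake (T : finType) (e : rel T) (U : {set T}) k :
  symmetric e -> irreflexive e ->
  (forall u, u \in U -> #|[set t | e u t] :&: U| = k) -> ~~ odd (#|U| * k).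
Proof.
move=> Hsym Hirr Hk.
pose P := [set p : T * T | [&& p.1 \in U, p.2 \in U & e p.1 p.2]].
have HP : #|P| = (#|U| * k)%N.
  rewrite -sum1_card big_mkcond /=.
  transitivity (\sum_(p : T * T) (fun i j => if (i, j) \in P then 1 else 0)%N p.1 p.2).
    by apply: eq_bigr => -[i j].
  rewrite -(pair_bigA _ (fun i j => if (i, j) \in P then 1 else 0)%N) /=.
  rewrite -sum_nat_const [RHS]big_mkcond /=; apply: eq_bigr => i _.
  case: (boolP (i \in U)) => Hi.
    rewrite -(Hk i Hi) -sum1_card [RHS]big_mkcond /=; apply: eq_bigr => j _.
    by rewrite !inE /= Hi /= andbC.
  by apply: big1 => j _; rewrite inE /= (negbTE Hi).
rewrite -HP; apply: (even_invol (f := fun p => (p.2, p.1))).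
- by move=> [a b]; rewrite !inE /= => /and3P [-> -> H]; rewrite Hsym.
- by move=> [a b].
- move=> [a b]; rewrite !inE /= => /and3P [_ _ H].
  apply/eqP => -[E _]; subst b; by rewrite Hirr in H.
Qed.

Lemma dvd_half (m a c : nat) :
  (m %| a + a)%N -> (m %| c + c)%N -> ~~ (m %| a)%N -> ~~ (m %| c)%N -> (m %| a + c)%N.
Proof.
move=> /dvdnP [k1 H1] /dvdnP [k2 H2] Na Nc.
have o1 : odd k1.
  apply/negPn/negP => o; case/negP: Na; apply/dvdnP; exists (k1./2).
  have := odd_double_half k1; rewrite (negbTE o) add0n -muln2 => E. nia.
have o2 : odd k2.
  apply/negPn/negP => o; case/negP: Nc; apply/dvdnP; exists (k2./2).
  have := odd_double_half k2; rewrite (negbTE o) add0n -muln2 => E. nia.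
apply/dvdnP; exists (k1./2 + k2./2 + 1)%N.
have := odd_double_half k1; have := odd_double_half k2; rewrite o1 o2 -!muln2 /=.
nia.
Qed.

Lemma d2_contra (T : finType) (e : rel T) (s : {perm T}) u0 w0 m :
  symmetric e -> irreflexive e -> nut_graph e -> is_automorphism e s ->
  (forall x, #|[set y | e x y]| = 2) ->
  (forall t, (t \notin porbit s u0) = (t \in porbit s w0)) ->
  (forall t i, (((s ^+ i)%g t) == t) = (m %| i)%N) ->
  (forall v, #|[set t | e v t] :&: porbit s u0| = 1) ->
  (forall v, #|[set t | e v t] :\: porbit s u0| = 1) -> False.
Proof.
move=> Hsym Hirr Hnut Haut Hreg HW Hper HU1 HW1.
set U := porbit s u0 in HW HU1 HW1 *.
have HsU i t : ((s ^+ i)%g t \in U) = (t \in U).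
  by rewrite -!eq_porbit_mem porbit_perm.
have Hu0U : u0 \in U by apply: porbit_id.
have [u1 Eu1] := cards1P (introT eqP (HU1 u0)).
have [w Ew] := cards1P (introT eqP (HW1 u0)).
have : u1 \in [set t | e u0 t] :&: U by rewrite Eu1 set11.
rewrite !inE => /andP [Hu0u1 Hu1U].
have : w \in [set t | e u0 t] :\: U by rewrite Ew set11.
rewrite !inE => /andP [HwU Hu0w].
case/porbitP: (Hu1U) => a Ea.
pose g := (s ^+ a)%g.
have Hg := aut_pow a Haut.
have Hgu1 : g u1 = u0.
  have [z Ez] := cards1P (introT eqP (HU1 u1)).
  have h1 : g u1 \in [set t | e u1 t] :&: U.
    by rewrite !inE HsU Hu1U andbT {1}Ea Hg.
  have h2 : u0 \in [set t | e u1 t] :&: U by rewrite !inE Hsym Hu0u1.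
  by move: h1 h2; rewrite Ez !inE => /eqP -> /eqP ->.
have Ha2 : (m %| a + a)%N.
  by rewrite -(Hper u0) expgD permM -/g -Ea Hgu1.
have Na : ~~ (m %| a)%N.
  rewrite -(Hper u0) -/g -Ea; apply/eqP => E.
  by rewrite E Hirr in Hu0u1.
have [w' Ew'] := cards1P (introT eqP (HW1 w)).
have : w' \in [set t | e w t] :\: U by rewrite Ew' set11.
rewrite !inE => /andP [Hw'U Hww'].
have : w' \in porbit s w.
  have : porbit s w = porbit s w0.
    by apply/eqP; rewrite eq_porbit_mem -HW.
  by move=> ->; rewrite -HW.
case/porbitP => c Ec.
pose h := (s ^+ c)%g.
have Hh := aut_pow c Haut.
have Hhw' : h w' = w.
  have [z Ez] := cards1P (introT eqP (HW1 w')).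
  have h1 : h w' \in [set t | e w' t] :\: U.
    by rewrite !inE HsU Hw'U {1}Ec Hh Hww'.
  have h2 : w \in [set t | e w' t] :\: U by rewrite !inE Hsym Hww' HwU.
  by move: h1 h2; rewrite Ez !inE => /eqP -> /eqP ->.
have Hc2 : (m %| c + c)%N.
  by rewrite -(Hper w) expgD permM -/h -Ec Hhw'.
have Nc : ~~ (m %| c)%N.
  rewrite -(Hper w) -/h -Ec; apply/eqP => E.
  by rewrite E Hirr in Hww'.
have Hac := dvd_half Ha2 Hc2 Na Nc.
have Hgw : g w = w'.
  apply: (@perm_inj _ h); rewrite Hhw'.
  by apply/eqP; rewrite -permM -expgD Hper.
have HwU' : w' \notin U by [].
have Hu1w : u1 != w by apply: contraNneq HwU => <-.
have N2 v : e v u1 -> e v w -> [set t | e v t] = [set u1; w].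
  move=> h1 h2; apply/eqP; rewrite eq_sym eqEcard Hreg cards2 Hu1w andbT.
  by apply/subsetP => t; rewrite !inE => /orP [] /eqP ->.
have Nu0 := N2 u0 Hu0u1 Hu0w.
have Nw' : [set t | e w' t] = [set u1; w].
  apply: N2.
    by rewrite -Hgw Ea Hg Hsym.
  by rewrite Hsym.
apply: (@twin _ e u0 w' u1 Hsym Hnut).
- by apply: contraNneq Hw'U => <-.
- move=> t; have := congr1 (fun A : {set T} => t \in A) Nu0.
  have := congr1 (fun A : {set T} => t \in A) Nw'.
  by rewrite !inE /= => -> ->.
- by apply: contraTneq Hu0u1 => ->; rewrite Hirr.
- by apply: contraTneq Hu1U => ->.
Qed.

Open Scope ring_scope.

Lemma sum_ind (T : finType) (A : {set T}) :
  \sum_t ((t \in A)%:R : algC) = #|A|%:R.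
Proof.
rewrite -sumr_const [RHS]big_mkcond /=; apply: eq_bigr => t _.
by case: (t \in A).
Qed.

Lemma sum_split (T : finType) (e : rel T) (v : T) (P : pred T) (x : T -> algC) :
  \sum_t (e v t)%:R * ((P t)%:R * x t) = \sum_(t in [set t | e v t && P t]) x t.
Proof.
rewrite [RHS]big_mkcond /=; apply: eq_bigr => t _; rewrite inE.
by case: (e v t); case: (P t); rewrite /= ?mul1r ?mul0r.
Qed.

Lemma L1 (a n : nat) : (a <= n.-1)%N -> (1 < n)%N -> (a < n)%N.
Proof. lia. Qed.
Lemma L2 (d n k c : nat) : (d + k = c)%N -> c = n -> (d + 2 = n)%N -> k = 2%N.
Proof. lia. Qed.
Lemma L3 (k : nat) : (2 = true + k)%N -> (0 < k)%N.
Proof. simpl; lia. Qed.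
Lemma L4 (kU kW d : nat) : (kU + kW = d)%N -> (1 <= kU)%N -> (0 < d)%N.
Proof. lia. Qed.
Lemma L5 (m : nat) : ~~ odd m -> (4 %| m * 2)%N.
Proof.
move=> H; apply/dvdnP; exists (m./2).
have := odd_double_half m; rewrite (negbTE H) add0n -muln2; lia.
Qed.
Lemma L6 (k d : nat) : ~~ odd k -> (k + k = d)%N -> (4 %| d)%N.
Proof.
move=> H E; apply/dvdnP; exists (k./2).
have := odd_double_half k; rewrite (negbTE H) add0n -muln2; lia.
Qed.
Lemma L7 (kU kW d : nat) : ~~ odd d -> (1 <= kU)%N -> (1 <= kW)%N ->
  (kU + kW = d)%N -> d <> 2%N -> (4 <= d)%N.
Proof.
move=> H; have := odd_double_half d; rewrite (negbTE H) add0n -muln2; lia.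
Qed.
Lemma L8 (d m : nat) : ~~ odd d -> (d < m * 2)%N -> (d + 2)%N <> (m * 2)%N ->
  (d + 4 <= m * 2)%N.
Proof.
move=> H; have := odd_double_half d; rewrite (negbTE H) add0n -muln2; lia.
Qed.

Lemma main_part (T : finType) (e : rel T) (d : nat) :
  simple_graph e -> regular e d -> bicirculant e -> nut_graph e ->
  let n := #|T| in
  [/\ ~~ odd n, ~~ odd d & (4 %| n)%N || (4 %| d)%N] /\ (4 <= d /\ d + 4 <= n)%N.
Proof.
move=> [Hsym Hirr] Hreg [s [Haut [H2 Heq]]] Hnut n.
have [u0 _] : exists u0 : T, true.
  have : (0 < #|T|)%N by apply: leq_trans (proj1 Hnut).
  by case/card_gt0P => u _; exists u.
have [w0 [HW Hcard HT]] := orbit_setup u0 H2 Heq.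
set U := porbit s u0 in HW Hcard HT.
set m := #|U| in Hcard HT.
have Hm0 : (0 < m)%N by rewrite lt0n card_porbit_neq0.
have HsU i t : ((s ^+ i)%g t \in U) = (t \in U).
  by rewrite -!eq_porbit_mem porbit_perm.
have HsU1 t : (s t \in U) = (t \in U) by have := HsU 1%N t; rewrite expg1.
have Hper t i : (((s ^+ i)%g t) == t) = (m %| i)%N by rewrite period Hcard.
have Hu0U : u0 \in U by apply: porbit_id.
have Hw0U : w0 \notin U by rewrite HW porbit_id.
have [x0 [Hx0 [t0 Ht0]]] := nut_exists Hsym Hnut.
have Hx0u : x0 u0 != 0 := @nut_ker _ _ x0 t0 u0 Hnut Hx0 Ht0.
pose x t := (x0 u0)^-1 * x0 t.
have Hx : kerf e x.
  by apply: kerf_ext (kerf_lin ((x0 u0)^-1) 0 Hx0 Hx0) => t; rewrite mul0r addr0.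
have Hxu : x u0 = 1 by rewrite /x mulVf.
have Hxnz t : x t != 0.
  by apply: (@nut_ker _ _ x u0 t Hnut Hx); rewrite Hxu oner_eq0.
have Hxr t : (x t)^* = x t.
  have := one_dim Hnut Hx (kerf_conj Hx) (Hxnz u0) t.
  by rewrite Hxu conjC1 mulr1 mul1r.
pose lam := x (s u0).
have Hxs t : x (s t) = lam * x t.
  have := one_dim Hnut Hx (kerf_perm Haut Hx) (Hxnz u0) t.
  by rewrite Hxu mulr1.
have Hxsi i t : x ((s ^+ i)%g t) = lam ^+ i * x t.
  elim: i => [|i IH]; first by rewrite expg0 perm1 expr0 mul1r.
  by rewrite expgSr permM Hxs IH exprS mulrA.
have Hlm : lam ^+ m = 1.
  have := Hxsi m u0; move: (Hper u0 m); rewrite dvdnn => /eqP ->.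
  by rewrite Hxu mulr1.
have Hl2 : lam ^+ 2 = 1.
  have Hn1 : `|lam| = 1.
    apply/eqP; rewrite -(pexpr_eq1 Hm0) ?normr_ge0 // -normrX Hlm normr1 //.
  have Hlr : lam^* = lam := Hxr (s u0).
  by rewrite expr2 -{2}Hlr -normCK Hn1 expr1n.
have HsqU t : t \in U -> x t ^+ 2 = 1.
  case/porbitP => i ->; rewrite Hxsi Hxu mulr1 exprAC Hl2 expr1n //.
set b := x w0.
have Hb0 : b != 0 by apply: Hxnz.
have HsqW t : t \notin U -> x t ^+ 2 = b ^+ 2.
  rewrite HW => /porbitP [i ->]; rewrite Hxsi exprMn exprAC Hl2 expr1n mul1r //.
pose al v := \sum_t (e v t)%:R * ((t \in U)%:R * x t).
pose be v := \sum_t (e v t)%:R * ((t \notin U)%:R * x t).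
have Hab v : al v + be v = 0.
  rewrite /al /be -big_split /=; apply: eq_trans (Hx v); apply: eq_bigr => t _.
  by rewrite -mulrDr -mulrDl; case: (t \in U); rewrite /= ?add0r ?addr0 mul1r.
have Has v : al (s v) = lam * al v.
  rewrite /al [LHS](reindex_inj (@perm_inj _ s)) mulr_sumr; apply: eq_bigr => t _.
  by rewrite Haut HsU1 Hxs; ring.
have Hbs v : be (s v) = lam * be v.
  rewrite /be [LHS](reindex_inj (@perm_inj _ s)) mulr_sumr; apply: eq_bigr => t _.
  by rewrite Haut HsU1 Hxs; ring.
have HalU t : t \in U -> al t = al u0 * x t.
  by move=> Ht; have := mode Has Hxs Ht; rewrite Hxu mulr1.
have HbeU t : t \in U -> be t = be u0 * x t.
  by move=> Ht; have := mode Hbs Hxs Ht; rewrite Hxu mulr1.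
have HalW t : t \notin U -> al t * b = al w0 * x t.
  by rewrite HW => Ht; apply: mode Has Hxs Ht.
have DC : \sum_t (t \in U)%:R * x t * be t = \sum_t (t \notin U)%:R * x t * al t.
  rewrite /al /be.
  under eq_bigr do rewrite mulr_sumr.
  under [RHS]eq_bigr do rewrite mulr_sumr.
  rewrite [RHS]exchange_big; apply: eq_bigr => t _; apply: eq_bigr => z _.
  by rewrite Hsym; ring.
have HmC : #|~: U| = m.
  have := cardsC U; rewrite HT -/m => E; lia.
have DC1 : \sum_t (t \in U)%:R * x t * be t = be u0 * m%:R.
  rewrite -sum_ind mulr_sumr; apply: eq_bigr => t _.
  case: (boolP (t \in U)) => Ht /=; last by rewrite !mul0r mulr0.
  by rewrite HbeU // mul1r mulr1 mulrCA -expr2 HsqU // mulr1.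
have DC2 : (\sum_t (t \notin U)%:R * x t * al t) * b = al w0 * b ^+ 2 * m%:R.
  rewrite -HmC -sum_ind mulr_suml mulr_sumr; apply: eq_bigr => t _.
  rewrite inE; case: (boolP (t \in U)) => Ht /=; first by rewrite !mul0r !mulr0.
  by rewrite -mulrA HalW // mul1r mulr1 mulrCA -expr2 HsqW // mulrC.
have Hm0C : (m%:R : algC) != 0 by rewrite pnatr_eq0 -lt0n.
have HDC : be u0 = al w0 * b.
  have := congr1 (fun z => z * b) DC; rewrite /= DC1 DC2 => E.
  apply: (mulIf Hb0); apply: (mulIf Hm0C).
  transitivity (be u0 * m%:R * b); first by ring.
  rewrite E; ring.
pose NU v := [set t | e v t] :&: U.
pose NW v := [set t | e v t] :\: U.
have HalN v : al v = \sum_(t in NU v) x t.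
  by rewrite /al sum_split; apply: eq_bigl => t; rewrite !inE.
have HbeN v : be v = b * \sum_(t in NW v) (x t / b).
  rewrite /be sum_split mulr_sumr; apply: eq_big => t; first by rewrite !inE andbC.
  by move=> _; rewrite mulrC divfK.
have Hsg1 v : \sum_(t in NU v) x t =
    #|NU v|%:R - 2 * #|[set t in NU v | x t == -1]|%:R.
  by apply: signed => t; rewrite !inE => /andP [_ /HsqU].
have Hsg2 v : \sum_(t in NW v) (x t / b) =
    #|NW v|%:R - 2 * #|[set t in NW v | x t / b == -1]|%:R.
  apply: signed => t; rewrite !inE => /andP [Ht _].
  by rewrite expr_div_n HsqW // divff // expf_neq0.
set kU := #|NU u0|. set kW := #|NW u0|. set kU' := #|NU w0|. set kW' := #|NW w0|.
set r1 := #|[set t in NU u0 | x t == -1]|.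
set r4 := #|[set t in NU w0 | x t == -1]|.
set r3 := #|[set t in NW u0 | x t / b == -1]|.
set r2 := #|[set t in NW w0 | x t / b == -1]|.
set P := kU%:R - 2 * r1%:R : algC.
set Q := kW%:R - 2 * r3%:R : algC.
set Q' := kU'%:R - 2 * r4%:R : algC.
set P' := kW'%:R - 2 * r2%:R : algC.
have Eal0 : al u0 = P by rewrite HalN Hsg1.
have Eal1 : al w0 = Q' by rewrite HalN Hsg1.
have Ebe0 : be u0 = b * Q by rewrite HbeN Hsg2.
have Ebe1 : be w0 = b * P' by rewrite HbeN Hsg2.
have h1 : P = - (b * Q).
  by apply/eqP; rewrite -subr_eq0 opprK -Eal0 -Ebe0 Hab.
have h2 : b * P' = - Q'.
  by apply/eqP; rewrite -subr_eq0 opprK addrC -Eal1 -Ebe1 Hab.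
have hQQ : Q = Q'.
  by apply: (mulfI Hb0); rewrite -Ebe0 HDC Eal1 mulrC.
have hPP : P * P' = Q * Q.
  apply: (mulfI Hb0); transitivity (P * (b * P')); first by ring.
  by rewrite h2 h1 -hQQ; ring.
have hQ0 : Q != 0.
  apply/eqP => HQ0.
  have HP0 : P = 0 by rewrite h1 HQ0 mulr0 oppr0.
  have HQ'0 : Q' = 0 by rewrite -hQQ.
  pose y t := (t \in U)%:R * x t.
  have Hy : kerf e y.
    move=> v; rewrite -/(al v).
    case: (boolP (v \in U)) => Hv; first by rewrite HalU // Eal0 HP0 mul0r.
    apply: (mulIf Hb0); rewrite HalW // Eal1 HQ'0 !mul0r //.
  have := @nut_ker _ _ y u0 w0 Hnut Hy.
  by rewrite /y Hu0U (negbTE Hw0U) mul1r mul0r eqxx Hxu oner_eq0 => /(_ isT).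
have E3 : (kU * kW' + 4 * r1 * r2 + 4 * kW * r3 =
     kW * kW + 4 * r3 * r3 + 2 * kU * r2 + 2 * kW' * r1)%N.
  apply/eqP; rewrite -(eqr_nat algC) !natrD !natrM; apply/eqP.
  apply/eqP; rewrite -subr_eq0; apply/eqP.
  transitivity (P * P' - Q * Q); first by rewrite /P /P' /Q; ring.
  by rewrite hPP subrr.
have E4 : (kW + 2 * r4 = kU' + 2 * r3)%N.
  apply/eqP; rewrite -(eqr_nat algC) !natrD ?natrM; apply/eqP.
  apply/eqP; rewrite -subr_eq0; apply/eqP.
  transitivity (Q - Q'); first by rewrite /Q /Q'; ring.
  by rewrite hQQ subrr.
have E5 : kW <> (2 * r3)%N.
  move=> E; case/eqP: hQ0; rewrite /Q E natrM; ring.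
have E1 : (kU + kW = d)%N by rewrite /kU /kW cardsID Hreg.
have E2 : (kU' + kW' = d)%N by rewrite /kU' /kW' cardsID Hreg.
have B1 : (r1 <= kU)%N by apply: subset_leq_card; apply/subsetP => t; rewrite inE => /andP [].
have B2 : (r2 <= kW')%N by apply: subset_leq_card; apply/subsetP => t; rewrite inE => /andP [].
have B3 : (r3 <= kW)%N by apply: subset_leq_card; apply/subsetP => t; rewrite inE => /andP [].
have B4 : (r4 <= kU')%N by apply: subset_leq_card; apply/subsetP => t; rewrite inE => /andP [].
have [Hdev HkU HkW Hd2 Hr0] := arith E1 E2 B1 B2 B3 B4 E3 E4 E5.
have HtrU v : v \in U -> #|NU v| = kU /\ #|NW v| = kW.
  by case/porbitP => i ->; apply: nbr_card (aut_pow i Haut) (HsU i).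
have HtrW v : v \notin U -> #|NU v| = kU' /\ #|NW v| = kW'.
  by rewrite HW => /porbitP [i ->]; apply: nbr_card (aut_pow i Haut) (HsU i).
have HdT : (d < n)%N.
  rewrite -(Hreg u0).
  have : [set t | e u0 t] \subset [set~ u0].
    by apply/subsetP => t; rewrite !inE; apply: contraTneq => ->; rewrite Hirr.
  move/subset_leq_card; rewrite cardsC1 => H; apply: L1 H (proj1 Hnut).
have N1 : (1 : algC) != -1.
  rewrite -addr_eq0. have -> : (1 + 1 : algC) = 2%:R by []. by rewrite pnatr_eq0.
have Hnd2 : (d + 2)%N <> n.
  move=> Hdn.
  have HNNc v : #|~: [set t | e v t]| = 2%N.
    by have := cardsC [set t | e v t]; rewrite Hreg => H; apply: L2 H _ Hdn.
  have Hu0NN : u0 \in ~: [set t | e u0 t] by rewrite !inE Hirr.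
  have : (0 < #|~: [set t | e u0 t] :\ u0|)%N.
    by have := cardsD1 u0 (~: [set t | e u0 t]); rewrite Hu0NN HNNc; apply: L3.
  case/card_gt0P => v'; rewrite !inE => /andP [Hv'u0 Hu0v'].
  have HS v : ~~ e v u0 -> ~~ e v v' -> ~: [set t | e v t] = [set u0; v'].
    move=> g1 g2; apply/eqP; rewrite eq_sym eqEcard HNNc cards2 eq_sym Hv'u0 andbT.
    by apply/subsetP => t; rewrite !inE => /orP [] /eqP ->.
  have S0 := HS u0 (negbT (Hirr u0)) Hu0v'.
  have S1 : ~: [set t | e v' t] = [set u0; v'].
    by apply: HS; [rewrite Hsym | rewrite Hirr].
  have : (0 < #|[set t | e u0 t]|)%N by rewrite Hreg; apply: L4 E1 HkU.
  case/card_gt0P => t1; rewrite inE => Ht1.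
  apply: (@twin _ e u0 v' t1 Hsym Hnut).
  - by rewrite eq_sym.
  - move=> t; have := congr1 (fun A : {set T} => t \in A) S0.
    have := congr1 (fun A : {set T} => t \in A) S1.
    by rewrite !inE /= => <- /negb_inj.
  - by apply: contraTneq Ht1 => ->; rewrite Hirr.
  - by apply: contraTneq Ht1 => ->.
have HnT : n = (m * 2)%N by [].
split; [split|split].
- by rewrite HnT muln2 odd_double.
- exact: Hdev.
- case: (boolP (odd m)) => Hmo; last by apply/orP; left; rewrite HnT; apply: L5.
  have Hl1 : lam = 1.
    have := Hlm; rewrite -(odd_double_half m) Hmo add1n exprS -muln2 mulnC exprM.
    by rewrite Hl2 expr1n mulr1.
  have Hx1 t : t \in U -> x t = 1.
    by case/porbitP => i ->; rewrite Hxsi Hl1 expr1n mul1r.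
  have Hxb t : t \notin U -> x t = b.
    by rewrite HW => /porbitP [i ->]; rewrite Hxsi Hl1 expr1n mul1r.
  have Hbb : b / b = 1 by rewrite divff.
  have R1 : r1 = 0%N.
    apply/eqP; rewrite cards_eq0; apply/eqP/setP => t; rewrite !inE.
    by case: (boolP (t \in U)) => Ht; rewrite ?andbF // Hx1 // (negbTE N1) andbF.
  have R4 : r4 = 0%N.
    apply/eqP; rewrite cards_eq0; apply/eqP/setP => t; rewrite !inE.
    by case: (boolP (t \in U)) => Ht; rewrite ?andbF // Hx1 // (negbTE N1) andbF.
  have R3 : r3 = 0%N.
    apply/eqP; rewrite cards_eq0; apply/eqP/setP => t; rewrite !inE.
    by case: (boolP (t \in U)) => Ht //=; rewrite Hxb // Hbb (negbTE N1) andbF.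
  have R2 : r2 = 0%N.
    apply/eqP; rewrite cards_eq0; apply/eqP/setP => t; rewrite !inE.
    by case: (boolP (t \in U)) => Ht //=; rewrite Hxb // Hbb (negbTE N1) andbF.
  have HkUW := Hr0 R1 R2 R3 R4.
  have Hhs : ~~ odd (m * kU) by apply: handshake Hsym Hirr _ => u /HtrU [].
  rewrite oddM Hmo /= in Hhs.
  apply/orP; right; apply: (L6 Hhs); rewrite {2}HkUW; exact: E1.
- have Hd2n : d <> 2%N.
    move=> Hd; have [a1 a2 a3 a4] := Hd2 Hd.
    apply: (@d2_contra T e s u0 w0 m Hsym Hirr Hnut Haut) => //.
    + by move=> v; rewrite Hreg.
    + move=> v; case: (boolP (v \in U)) => Hv.
        by have [-> _] := HtrU v Hv.
      by have [-> _] := HtrW v Hv.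
    + move=> v; case: (boolP (v \in U)) => Hv.
        by have [_ ->] := HtrU v Hv.
      by have [_ ->] := HtrW v Hv.
  exact: L7 Hdev HkU HkW E1 Hd2n.
- by rewrite HnT; apply: L8 Hdev _ _; rewrite -HnT.
Qed.

Close Scope ring_scope.

Theorem mainTheorem18 (T : finType) (e : rel T) (d : nat) :
  simple_graph e -> regular e d -> bicirculant e -> nut_graph e ->
  let n := #|T| in
  [/\ ~~ odd n, ~~ odd d & (4 %| n) || (4 %| d)] /\ (4 <= d /\ d + 4 <= n).
Proof. exact: main_part. Qed.
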